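(* Let $\xi_1,\xi_2,\dots$ be i.i.d. standard Gaussian random variables. There are constants $\tilde c_3,\tilde c_4>0$ such that for all $L>0$ and all $N\in\mathbb{N}$ with $L/2\le N\le2L$, $$\tilde c_3L\le-\log\mathbb{E}\,e^{-L\max_{i=1,\dots,N}|\xi_i|}\le\tilde c_4L.$$ *)

(* Defs.v *)
From HB Require Import structures.
From mathcomp Require Import all_boot all_order all_algebra.
From mathcomp Require Import finmap.
From mathcomp Require Import all_classical all_reals all_analysis.
Set Implicit Arguments. Unset Strict Implicit. Unset Printing Implicit Defensive.
Import Order.TTheory GRing.Theory Num.Theory.
Local Open Scope classical_set_scope.
Local Open Scope ring_scope.

Definition mutually_independent_RVs {d} {T : measurableType d} {R : realType}
    (P : probability T R) (X : nat -> {RV P >-> R}) : Prop :=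
  forall (J : {fset nat}) (B : nat -> set R),
    (forall j, j \in J -> measurable (B j)) ->
    P (\bigcap_(j in [set` J]) (X j @^-1` B j)) =
    (\prod_(j <- J) P (X j @^-1` B j))%E.

Definition standard_gaussian_RV {d} {T : measurableType d} {R : realType}
    (P : probability T R) (X : {RV P >-> R}) : Prop :=
  forall A : set R, measurable A -> distribution P X A = normal_prob 0 1 A.

(* max_{i = 1..N} |xi_i| (indices shifted to 0..N-1) *)
Definition max_abs {d} {T : measurableType d} {R : realType}
    (P : probability T R) (xi : nat -> {RV P >-> R}) (N : nat) (w : T) : R :=
  \big[Num.max/0]_(i < N) `|xi i w|.

(* Main.v *)
Require Import Defs.
From HB Require Import structures.
From mathcomp Require Import all_boot all_order all_algebra.
From mathcomp Require Import finmap.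
From mathcomp Require Import all_classical all_reals all_analysis.
From mathcomp Require Import measurable_realfun.
From mathcomp Require Import lra ring.
Import Order.TTheory GRing.Theory Num.Theory.
Local Open Scope classical_set_scope.
Local Open Scope ring_scope.
Lemma np_pos (R : realType) (a b : R) : a < b ->
  (0 < normal_prob 0 1 `[a, b]%classic)%E.
Proof.
move=> ab.
pose c := normal_peak (1:R) * expR (- (a ^+ 2 + b ^+ 2) / 2).
have c0 : 0 < c by rewrite mulr_gt0 ?expR_gt0 // normal_peak_gt0 // oner_neq0.
apply: (@lt_le_trans _ _ (\int[lebesgue_measure]_(x in `[a, b]%classic) (cst c%:E) x)%E).
  rewrite integral_cst //. have := lebesgue_measure_itv `[a,b]; rewrite /= lte_fin ab => h. rewrite [X in (_ * X)%E]h -EFinB -EFinM lte_fin mulr_gt0 // subr_gt0 //.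
apply: ge0_le_integral => //=.
- by move=> x _; rewrite lee_fin ltW.
- apply/measurable_EFinP; apply: measurable_funTS; exact: measurable_normal_pdf.
move=> x; rewrite in_itv /= => /andP[ax xb]; rewrite lee_fin.
rewrite /normal_pdf oner_eq0 /c /normal_fun ler_pM2l ?normal_peak_gt0 ?oner_neq0 //.
rewrite ler_expR subr0 expr1n.
have h : x ^+ 2 <= a ^+ 2 + b ^+ 2.
  move: (x : R) ax xb => y ay yb.
  have [y0|y0] := lerP 0 y; nra.
rewrite !mulNr lerN2 ler_pM2r //.
Qed.

Lemma prod_cst_seq (R : realType) (s : seq nat) (p : R) :
  (\prod_(j <- s) p%:E)%E = (p ^+ size s)%:E.
Proof.
elim: s => [|a s IH]; first by rewrite big_nil.
by rewrite big_cons IH /= exprS EFinM.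
Qed.

Lemma max_abs_le1 (R : realType) (d : measure_display) (T : measurableType d)
    (P : probability T R) (xi : nat -> {RV P >-> R}) N w :
  (max_abs xi N w <= 1) <-> (forall i, (i < N)%N -> `|xi i w| <= 1).
Proof.
rewrite /max_abs; split.
  move/bigmax_leP => [_ h] i iN.
  exact: (h (Ordinal iN)).
move=> h; apply/bigmax_leP; split => // i _; exact: h.
Qed.

Lemma measurable_max_abs_aux (R : realType) (d : measure_display) (T : measurableType d)
    (P : probability T R) (xi : nat -> {RV P >-> R}) n :
  forall k, measurable_fun setT (fun w => \big[Num.max/0]_(i < n) `|xi (i + k)%N w|).
Proof.
elim: n => [|n IH] k.
  rewrite (_ : (fun w => _) = cst 0); first exact: measurable_cst.
  by apply/funext => w; rewrite big_ord0.
rewrite (_ : (fun w => _) = (fun w => Num.max `|xi k w|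
   (\big[Num.max/0]_(i < n) `|xi (i + k.+1)%N w|))); last first.
  apply/funext => w; rewrite big_ord_recl /= add0n.
  rewrite (eq_bigr (fun i : 'I_n => `|xi (i + k.+1)%N w|)) //.
  move=> i _; by rewrite /bump leq0n add1n addSnnS.
apply: measurable_maxr => //.
apply: measurableT_comp => //; exact: measurable_funP.
Qed.

Lemma measurable_max_abs (R : realType) (d : measure_display) (T : measurableType d)
    (P : probability T R) (xi : nat -> {RV P >-> R}) N :
  measurable_fun setT (max_abs xi N).
Proof.
have := @measurable_max_abs_aux _ _ _ _ xi N 0.
rewrite /max_abs (_ : (fun w => _) = (fun w => \big[Num.max/0]_(i < N) `|xi i w|)) //.
by apply/funext => w; apply: eq_bigr => i _; rewrite addn0.
Qed.


Lemma PA (R : realType) (d : measure_display) (T : measurableType d)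
    (P : probability T R) (xi : nat -> {RV P >-> R})
    (hind : mutually_independent_RVs xi)
    (hgauss : forall i, standard_gaussian_RV (xi i)) N :
  P [set w | max_abs xi N w <= 1] =
    ((fine (normal_prob 0 1 `[-1, 1]%classic)) ^+ N)%:E.
Proof.
pose J := seq_fset tt (iota 0 N).
have -> : [set w | max_abs xi N w <= 1] =
    \bigcap_(j in [set` J]) (xi j @^-1` `[-1, 1]%classic).
  apply/seteqP; split => w /=.
    move/max_abs_le1 => h j /=; rewrite seq_fsetE mem_iota add0n => /andP[_ jN].
    by rewrite /= in_itv /= -ler_norml h.
  move=> h; apply/max_abs_le1 => i iN.
  have := h i; rewrite /= seq_fsetE mem_iota add0n iN /= in_itv /= ler_norml.
  by apply.
rewrite hind; last by move=> j _; exact: measurable_itv.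
have e : forall j, P (xi j @^-1` `[-1, 1]%classic) =
    (fine (normal_prob 0 1 `[-1, 1]%classic))%:E.
  move=> j; have := hgauss j `[-1, 1]%classic (measurable_itv _).
  rewrite /distribution /pushforward => ->.
  rewrite fineK // ge0_fin_numE ?measure_ge0 //.
  apply: (le_lt_trans (@probability_le1 _ _ R (normal_prob 0 1) _ (measurable_itv `[-1, 1]))).
  by rewrite ltry.
under eq_bigr do rewrite e.
rewrite prod_cst_seq; congr (_ ^+ _)%:E.
rewrite (perm_size (seq_fset_perm _ _)) undup_id ?iota_uniq //.
by rewrite size_iota.
Qed.

Lemma max_abs_ge0 (R : realType) (d : measure_display) (T : measurableType d)
    (P : probability T R) (xi : nat -> {RV P >-> R}) N w : 0 <= max_abs xi N w.
Proof. exact: bigmax_ge_id. Qed.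

Lemma E_bounds (R : realType) (d : measure_display) (T : measurableType d)
    (P : probability T R) (xi : nat -> {RV P >-> R})
    (hind : mutually_independent_RVs xi)
    (hgauss : forall i, standard_gaussian_RV (xi i)) (L : R) N : 0 < L ->
  ((expR (- L) * (fine (normal_prob 0 1 `[-1, 1]%classic)) ^+ N)%:E
     <= 'E_P[fun w => expR (- (L * max_abs xi N w))] /\
   'E_P[fun w => expR (- (L * max_abs xi N w))] <=
     (expR (- L) + (1 - expR (- L)) * (fine (normal_prob 0 1 `[-1, 1]%classic)) ^+ N)%:E)%E.
Proof.
move=> L0.
set p := fine _.
set A := [set w | max_abs xi N w <= 1].
have mM := @measurable_max_abs _ _ _ _ xi N.
have mA : measurable A.
  rewrite (_ : A = (max_abs xi N) @^-1` `]-oo, 1]); last first.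
    by apply/seteqP; split => w /=; rewrite in_itv.
  by rewrite -[_ @^-1` _]setTI; apply: mM => //; exact: measurable_itv.
have PAe : P A = (p ^+ N)%:E by exact: (@PA _ _ _ _ xi hind hgauss N).
set g := fun w => expR (- (L * max_abs xi N w)).
have mg : measurable_fun setT g.
  apply: measurableT_comp; first exact: measurable_expR.
  apply: measurableT_comp; first exact: oppr_measurable.
  by apply: measurable_funM => //; exact: measurable_cst.
have mgE : measurable_fun setT (fun w => (g w)%:E) by exact/measurable_EFinP.
rewrite unlock; split.
  apply: (@le_trans _ _ (\int[P]_(w in A) (g w)%:E)%E); last first.
    apply: ge0_subset_integral => //= w _; rewrite lee_fin expR_ge0 //.
  rewrite EFinM -PAe -(@integral_cst _ _ _ P A mA (expR (- L))%:E).
  apply: ge0_le_integral => //=.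
    exact: measurable_funTS.
  move=> w Aw; rewrite lee_fin /g ler_expR lerN2 ler_piMr //; exact: ltW.
have k0 : 0 <= expR (- L) by exact: expR_ge0.
have k1 : expR (- L) <= 1 by rewrite expR_le1 oppr_le0 ltW.
have H : (\int[P]_w (g w)%:E <= \int[P]_w ((expR (- L) + (1 - expR (- L)) * \1_A w)%:E))%E.
  apply: ge0_le_integral => //=.
  - by move=> w _; rewrite lee_fin expR_ge0.
  - apply/measurable_EFinP; apply: measurable_funD; first exact: measurable_cst.
    apply: measurable_funM; first exact: measurable_cst.
    exact: measurable_indic.
  move=> w _; rewrite lee_fin /g.
  have [Aw|nAw] := boolP (w \in A).
    rewrite indicE Aw mulr1 subrKC expR_le1 oppr_le0 mulr_ge0 //; [exact: ltW | exact: max_abs_ge0].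
  rewrite indicE (negbTE nAw) mulr0 addr0 ler_expR lerN2 ler_peMr //; first exact: ltW.
  by move: nAw; rewrite notin_setE /A /= => /negP; rewrite -ltNge => /ltW.
apply: (le_trans H).
under eq_integral do rewrite EFinD.
rewrite ge0_integralD //=.
  rewrite integral_cst // [X in (_ * X)%E](_ : _ = 1%E); last exact: probability_setT.
  rewrite mule1.
  under eq_integral do rewrite EFinM.
  rewrite ge0_integralZl //=.
  + rewrite integral_indic // setIT [X in (_ * X)%E](_ : _ = (p ^+ N)%:E); last exact: PAe.
    by rewrite -EFinM -EFinD.
  + exact/measurable_EFinP/measurable_indic.
  + by rewrite lee_fin subr_ge0.
- by move=> w _; rewrite lee_fin mulr_ge0 ?subr_ge0 // indicE; case: (_ \in _).
- apply/measurable_EFinP; apply: measurable_funM; first exact: measurable_cst.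
  exact: measurable_indic.
Qed.

Lemma ln_le_sub1 (R : realType) (f : R) : 0 < f -> ln f <= f - 1.
Proof.
move=> f0; have := @le_ln1Dx R (f - 1); rewrite [1 + _]addrC subrK; apply.
lra.
Qed.

Lemma real_part (R : realType) (p : R) : 0 < p -> p < 1 ->
  exists c3 c4 : R, 0 < c3 /\ 0 < c4 /\
  forall (L e : R) (N : nat), 0 < L -> L / 2 <= N%:R -> N%:R <= 2 * L ->
    expR (- L) * p ^+ N <= e -> e <= expR (- L) + (1 - expR (- L)) * p ^+ N ->
    c3 * L <= - ln e /\ - ln e <= c4 * L.
Proof.
move=> p0 p1.
have lp0 : ln p < 0 by rewrite ln_lt0 // p0.
have l20 : 0 < ln (2 : R) by rewrite ln_gt0 // ltr1n.
pose a := Num.min 1 (- ln p / 2).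
have a0 : 0 < a by rewrite lt_min ltr01 /= divr_gt0 // oppr_gt0.
have a1 : a <= 1 by rewrite ge_min lexx.
have a2 : a <= - ln p / 2 by rewrite ge_min lexx orbT.
pose dl := (2 / 3) * (1 - p).
have dl0 : 0 < dl by rewrite mulr_gt0 // subr_gt0.
pose lam := dl / (dl + ln 2).
have lam0 : 0 < lam by rewrite divr_gt0 // addr_gt0.
have lam1 : lam <= 1 by rewrite ler_pdivrMr ?addr_gt0 // mul1r lerDl ltW.
have lamE : lam * ln 2 = (1 - lam) * dl.
  rewrite /lam; field; rewrite gt_eqF // addr_gt0 //.
pose c1 := (1 - p) / 3.
have c10 : 0 < c1 by rewrite divr_gt0 // subr_gt0.
exists (Num.min c1 (lam * a)), (1 - 2 * ln p).
split; first by rewrite lt_min c10 mulr_gt0.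
split; first by lra.
move=> L e N L0 hN1 hN2 he1 he2.
set x := expR (- L) in he1 he2.
set y := p ^+ N in he1 he2.
have x0 : 0 < x by exact: expR_gt0.
have y0 : 0 < y by exact: exprn_gt0.
have N1 : (1 <= N)%N.
  rewrite lt0n; apply/negP => /eqP N0; move: hN1; rewrite N0 /=; lra.
have y1 : y <= p.
  by rewrite /y -[leRHS]expr1 ler_wiXn2l // ltW.
have yE : y = expR (N%:R * ln p).
  by rewrite mulr_natl -lnXn // lnK // posrE exprn_gt0.
have e0 : 0 < e by apply: lt_le_trans he1; rewrite mulr_gt0.
have xL : x <= (1 + L)^-1.
  rewrite /x expRN lef_pV2 ?posrE ?expR_gt0 ?addr_gt0 //; exact: expR_ge1Dx.
split; last first.
  have : ln (x * y) <= ln e by rewrite ler_ln // posrE mulr_gt0.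
  rewrite lnM ?posrE // /x expRK /y lnXn // -mulr_natr.
  have h : N%:R * ln p >= (2 * L) * ln p.
    nra.
  lra.
pose f := x + (1 - x) * y.
have f0 : 0 < f by apply: lt_le_trans e0 he2.
have hf : - ln f <= - ln e by rewrite lerN2 ler_ln // posrE.
apply: le_trans hf.
have F1 : 1 - f <= - ln f.
  have := @ln_le_sub1 R f f0.
  lra.
set u := (1 + L)^-1 in xL.
have hu : u * (1 + L) = 1 by rewrite /u mulVf // gt_eqF // addr_gt0.
have u0 : 0 < u by rewrite /u invr_gt0 addr_gt0.
have fE : 1 - f = (1 - x) * (1 - y) by rewrite /f; ring.
have c3c1 : Num.min c1 (lam * a) <= c1 by rewrite ge_min lexx.
have c3la : Num.min c1 (lam * a) <= lam * a by rewrite ge_min lexx orbT.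
have [L2|L2] := lerP L 2.
  have hu3 : u <= 1 - L / 3.
    nra.
  have h1 : (1 - x) * (1 - y) >= (L / 3) * (1 - p).
    nra.
  have h2 : Num.min c1 (lam * a) * L <= c1 * L by rewrite ler_pM2r.
  rewrite /c1 in h2; lra.
have hu3 : u <= 1 / 3.
  nra.
have h1 : 1 - f >= dl.
  rewrite fE /dl; nra.
have hxa : x <= expR (- (a * L)).
  rewrite /x ler_expR lerN2 ger_pMl //.
have hya : y <= expR (- (a * L)).
  rewrite yE ler_expR.
  have h3 : N%:R * ln p <= (L / 2) * ln p.
    nra.
  have h4 : a * L <= (- ln p / 2) * L by rewrite ler_pM2r.
  lra.
have hf2 : f <= 2 * expR (- (a * L)).
  rewrite /f; nra.
have h5 : ln f <= ln 2 - a * L.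
  rewrite -[- (a * L)](expRK (- (a * L))) -lnM ?posrE ?expR_gt0 //.
  by rewrite ler_ln // posrE mulr_gt0 // expR_gt0.
have h6 : lam * (a * L) <= - ln f.
  have -> : lam * (a * L) = lam * (a * L - ln 2) + (1 - lam) * dl.
    by rewrite mulrBr lamE; ring.
  nra.
have h7 : Num.min c1 (lam * a) * L <= lam * a * L by rewrite ler_pM2r.
lra.
Qed.

Lemma p_bounds (R : realType) :
  0 < fine (normal_prob (0:R) 1 `[-1, 1]%classic) /\ fine (normal_prob (0:R) 1 `[-1, 1]%classic) < 1.
Proof.
have le1 : forall A : set R, measurable A -> (normal_prob (0:R) 1 A <= 1)%E.
  by move=> A mA; exact: (@probability_le1 _ _ R (normal_prob 0 1) _ mA).
have fin : normal_prob (0:R) 1 `[-1, 1]%classic \is a fin_num.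
  rewrite ge0_fin_numE ?measure_ge0 //.
  by apply: (le_lt_trans (le1 _ (measurable_itv _))); rewrite ltry.
have pos := @np_pos R (-1) 1 ltac:(lra).
have pos2 := @np_pos R 2 3 ltac:(lra).
have sub : `[-1, 1]%classic `<=` ~` `[(2:R), 3]%classic.
  move=> x /=; rewrite !in_itv /= => /andP[_ x1] /andP[x2 _].
  by have := le_trans x2 x1; rewrite lern1.
have h := @le_measure _ _ _ (normal_prob (0:R) 1) _ _ (mem_set (measurable_itv `[-1, 1]))
  (mem_set (measurableC (measurable_itv `[(2:R), 3]))) sub.
rewrite [X in (_ <= X)%E](_ : _ = (1 - normal_prob 0 1 `[(2%R:R), 3%R]%classic)%E) in h; last first.
  exact: (@probability_setC _ _ R (normal_prob 0 1) _ (measurable_itv _)).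
split; first by rewrite -lte_fin fineK.
rewrite -lte_fin fineK //; apply: (le_lt_trans h).
have fin2 : normal_prob (0:R) 1 `[(2:R), 3]%classic \is a fin_num.
  rewrite ge0_fin_numE ?measure_ge0 //.
  by apply: (le_lt_trans (le1 _ (measurable_itv _))); rewrite ltry.
rewrite -(fineK fin2) -EFinB lte_fin ltrBlDr ltrDl.
by rewrite -lte_fin fineK.
Qed.

Lemma fine_between (R : realType) (a b : R) (x : \bar R) :
  (a%:E <= x)%E -> (x <= b%:E)%E -> a <= fine x /\ fine x <= b.
Proof. by case: x => [r| |] //=; rewrite !lee_fin. Qed.

Theorem lemma9 (R : realType) (d : measure_display) (T : measurableType d)
    (P : probability T R) (xi : nat -> {RV P >-> R})
    (hind : mutually_independent_RVs xi)
    (hgauss : forall i, standard_gaussian_RV (xi i)) :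
  exists c3 c4 : R, 0 < c3 /\ 0 < c4 /\
    forall (L : R) (N : nat), 0 < L -> L / 2 <= N%:R -> N%:R <= 2 * L ->
      c3 * L <= - ln (fine ('E_P[fun w => expR (- (L * max_abs xi N w))])%E)
      /\ - ln (fine ('E_P[fun w => expR (- (L * max_abs xi N w))])%E) <= c4 * L.
Proof.
have [p0 p1] := p_bounds R.
have [c3 [c4 [c30 [c40 H]]]] := @real_part R _ p0 p1.
exists c3, c4; split => //; split => // L N L0 hN1 hN2.
have [E1 E2] := @E_bounds _ _ _ _ xi hind hgauss L N L0.
have [e1 e2] := @fine_between R _ _ _ E1 E2.
exact: (H L _ N L0 hN1 hN2 e1 e2).
Qed.
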